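(* Consider the coupled SIS epidemic and evolutionary behavioral dynamics $$\dot y = \big[(1-y)(z_S+\alpha(1-z_S))(\beta_u z_I+\beta_p(1-z_I))-\gamma\big]y,$$ $$\dot z_S = z_S(1-z_S)\big[c_P - L(1-\alpha)(\beta_u z_I+\beta_p(1-z_I))\,y\big],$$ $$\dot z_I = z_I(1-z_I)(c_{\mathtt{IP}}-c_{\mathtt{IU}}),$$ on $[0,1]^3$. Define $$y^*_u := 1-\frac{\gamma}{\beta_p},\quad y^*_{\mathrm{int}} := \frac{c_P}{L(1-\alpha)\beta_p},\quad y^*_p := 1-\frac{\gamma}{\alpha\beta_p},\quad z^*_{S,\mathrm{int}} := \frac{1}{1-\alpha}\left[\frac{\gamma}{\beta_p(1-y^*_{\mathrm{int}})}-\alpha\right],$$ and the candidate equilibria (with $z_I=0$) $\mathbf{E0}=(0,0,0)$, $\mathbf{E1}=(0,1,0)$, $\mathbf{E2}=(y^*_u,1,0)$, $\mathbf{E3}=(y^*_{\mathrm{int}},z^*_{S,\mathrm{int}},0)$, $\mathbf{E4}=(y^*_p,0,0)$. Then: (1) $\mathbf{E0}$ is an equilibrium for all parameter values and is unstable; (2) $\mathbf{E1}$ is an equilibrium for all parameter values; it is stable if $\beta_p<\gamma$ and unstable if $\beta_p>\gamma$; (3) $\mathbf{E2}$ is an equilibrium in $[0,1]^3$ (with $y>0$) only when $\beta_p>\gamma$; it is stable when $y^*_u<y^*_{\mathrm{int}}$ and unstable when $y^*_u>y^*_{\mathrm{int}}$; (4) $\mathbf{E3}$ is an equilibrium with $y^*_{\mathrm{int}}\in(0,1)$,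 $z^*_{S,\mathrm{int}}\in(0,1)$ only when $y^*_p<y^*_{\mathrm{int}}<y^*_u$, and then it is stable; (5) $\mathbf{E4}$ is an equilibrium with $y^*_p\in(0,1)$ only when $\gamma<\alpha\beta_p$; it is stable when $y^*_p>y^*_{\mathrm{int}}$ and unstable when $y^*_p<y^*_{\mathrm{int}}$.
   Context: Parameters: $\alpha\in(0,1)$, $\beta_u>\beta_p>0$, $\gamma>0$, $c_P>0$, $L>0$, $c_{\mathtt{IU}}>c_{\mathtt{IP}}\ge 0$. Here $y$ is the infected fraction, $z_S$ the unprotected fraction among susceptibles, $z_I$ the unprotected fraction among infected. ''Stable'' means locally exponentially stable (all eigenvalues of the Jacobian of the vector field at the equilibrium have negative real part); ''unstable'' means the Jacobian has an eigenvalue with positive real part. *)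

(* Defs.v *)
From mathcomp Require Import all_boot all_algebra.
From mathcomp Require Import all_classical all_reals all_analysis.
From mathcomp Require Import complex.
Set Implicit Arguments. Unset Strict Implicit. Unset Printing Implicit Defensive.
Import GRing.Theory Num.Theory.
Local Open Scope ring_scope.

(* A point (y, z_S, z_I) of R^3, as a row vector: coordinate 0 = y,
   1 = z_S, 2 = z_I. *)
Definition pt3 {R : realType} (a b c : R) : 'rV[R]_3 :=
  \row_(i < 3) (if (i : nat) == 0%N then a else if (i : nat) == 1%N then b else c).

Definition sis_field {R : realType} (alpha bu bp gamma cP L cIU cIP : R)
    (x : 'rV[R]_3) : 'rV[R]_3 :=
  let y := x 0 0 in let zS := x 0 1 in let zI := x 0 2 in
  let beta := bu * zI + bp * (1 - zI) in
  pt3 (((1 - y) * (zS + alpha * (1 - zS)) * beta - gamma) * y)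
      (zS * (1 - zS) * (cP - L * (1 - alpha) * beta * y))
      (zI * (1 - zI) * (cIP - cIU)).

Definition is_equilibrium {R : realType} (F : 'rV[R]_3 -> 'rV[R]_3)
    (x : 'rV[R]_3) : Prop := F x = 0.

Definition jacobian {R : realType} {n : nat} (F : 'rV[R]_n -> 'rV[R]_n)
    (x : 'rV[R]_n) : 'M[R]_n :=
  \matrix_(i < n, j < n) ('D_(delta_mx 0 j) (fun u => F u 0 i) x).

Definition eigenvalueC {R : realType} {n : nat} (A : 'M[R]_n) (z : R[i]) : bool :=
  root (map_poly (real_complex R) (char_poly A)) z.

Definition stable_at {R : realType} {n : nat} (F : 'rV[R]_n -> 'rV[R]_n)
    (x : 'rV[R]_n) : Prop :=
  forall z : R[i], eigenvalueC (jacobian F x) z -> complex.Re z < 0.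

Definition unstable_at {R : realType} {n : nat} (F : 'rV[R]_n -> 'rV[R]_n)
    (x : 'rV[R]_n) : Prop :=
  exists z : R[i], eigenvalueC (jacobian F x) z /\ 0 < complex.Re z.

(* Main.v *)
Require Import Defs.
From mathcomp Require Import all_boot all_algebra.
From mathcomp Require Import all_classical all_reals all_analysis.
From mathcomp Require Import complex.
From mathcomp Require Import ring lra.
Import GRing.Theory Num.Theory.
Local Open Scope ring_scope.
Section S.
Variable R : realType.
Local Open Scope complex_scope.
Local Open Scope classical_set_scope.

Lemma cpE (g : nat -> nat -> R) : g 2%N 0%N = 0 -> g 2%N 1%N = 0 ->
 char_poly (\matrix_(i<3,j<3) g i j) = ('X - (g 2%N 2%N)%:P) *
   ('X^2 - ((g 0%N 0%N)%:P + (g 1%N 1%N)%:P) * 'X + (g 0%N 0%N)%:P * (g 1%N 1%N)%:P - (g 0%N 1%N)%:P * (g 1%N 0%N)%:P).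
Proof.
move=> h20 h21.
rewrite /char_poly (expand_det_row _ ord_max) !big_ord_recr big_ord0 /= add0r.
rewrite /cofactor.
rewrite !(expand_det_row _ ord_max) !big_ord_recr !big_ord0 /=.
rewrite /cofactor !mxE /=. rewrite !det_mx11 !mxE /bump /= h20 h21.
rewrite /bump /= /bump /= !(addn0, add0n, addn1) /=. rewrite (_ : (2+2 = 4)%N) //.
ring.
Qed.


Lemma eigE (g : nat -> nat -> R) (z : R[i]) : g 2%N 0%N = 0 -> g 2%N 1%N = 0 ->
  eigenvalueC (\matrix_(i<3,j<3) g i j) z <->
  z = (g 2%N 2%N)%:C \/ z ^+ 2 - ((g 0%N 0%N)%:C + (g 1%N 1%N)%:C) * z + (g 0%N 0%N)%:C * (g 1%N 1%N)%:C - (g 0%N 1%N)%:C * (g 1%N 0%N)%:C = 0.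
Proof.
move=> h20 h21; rewrite /eigenvalueC cpE //.
rewrite rmorphM /= rootM rmorphB /= map_polyX map_polyC /= root_XsubC.
rewrite /root !(rmorphB, rmorphD, rmorphM, rmorphN) /= !map_polyX !map_polyC !hornerE /= expr2.
split => [/orP [/eqP -> | /eqP ->] | [-> | ->]]; [by left | by right | by rewrite eqxx | by rewrite eqxx orbT].
Qed.

Lemma quad_re (a b c e : R) (z : R[i]) : a + b < 0 -> 0 < a * b - c * e ->
  z ^+ 2 - (a%:C + b%:C) * z + a%:C * b%:C - c%:C * e%:C = 0 -> complex.Re z < 0.
Proof.
case: z => x y ht hd; rewrite expr2 => /eqP; rewrite eq_complex /= => /andP [/eqP e1 /eqP e2].
rewrite /=.
have : y * (2 * x - (a + b)) = 0 by rewrite -e2; ring.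
move/eqP; rewrite mulf_eq0 => /orP [/eqP y0 | /eqP h]; last by lra.
rewrite y0 in e1; nra.
Qed.

Lemma stable_g (g : nat -> nat -> R) : g 2%N 0%N = 0 -> g 2%N 1%N = 0 -> g 2%N 2%N < 0 ->
  g 0%N 0%N + g 1%N 1%N < 0 -> 0 < g 0%N 0%N * g 1%N 1%N - g 0%N 1%N * g 1%N 0%N ->
  forall z, eigenvalueC (\matrix_(i<3,j<3) g i j) z -> complex.Re z < 0.
Proof.
move=> h20 h21 h22 ht hd z /(eigE _ _ h20 h21) [-> // | ]; exact: quad_re.
Qed.
Lemma unstable_g0 (g : nat -> nat -> R) : g 2%N 0%N = 0 -> g 2%N 1%N = 0 -> g 1%N 0%N = 0 ->
  0 < g 0%N 0%N -> exists z, eigenvalueC (\matrix_(i<3,j<3) g i j) z /\ 0 < complex.Re z.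
Proof.
move=> h20 h21 h10 hp; exists (g 0%N 0%N)%:C; split => //.
apply/(eigE _ _ h20 h21); right; rewrite h10 (_ : (0:R)%:C = 0) //; ring.
Qed.
Lemma unstable_g1 (g : nat -> nat -> R) : g 2%N 0%N = 0 -> g 2%N 1%N = 0 -> g 1%N 0%N = 0 ->
  0 < g 1%N 1%N -> exists z, eigenvalueC (\matrix_(i<3,j<3) g i j) z /\ 0 < complex.Re z.
Proof.
move=> h20 h21 h10 hp; exists (g 1%N 1%N)%:C; split => //.
apply/(eigE _ _ h20 h21); right; rewrite h10 (_ : (0:R)%:C = 0) //; ring.
Qed.

Lemma isd_coord (x v : 'rV[R]_3) k : is_derive x v (fun u : 'rV[R]_3 => u 0 k) (v 0 k).
Proof.
have e : forall h : R, h != 0 -> h^-1 *: ((h *: v + x) 0 k - x 0 k) = v 0 k.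
  move=> h hn; rewrite !mxE addrK /GRing.scale /= mulrA mulVf // mul1r.
  done.
split.
  rewrite /derivable. apply/cvg_ex; exists (v 0 k). apply: cvg_near_cst. near=> h; rewrite /= e //.
  near: h. exact: withinT.
rewrite /derive; apply/lim_near_cst => //=; near=> h; rewrite /= e //.
near: h. exact: withinT.
Unshelve. all: by end_near. Qed.
Lemma isd_cst (x v : 'rV[R]_3) (c : R) : is_derive x v (fun _ : 'rV[R]_3 => c) 0.
Proof. exact: is_derive_cst. Qed.
Lemma isdD (f g : 'rV[R]_3 -> R) x v df dg : is_derive x v f df -> is_derive x v g dg ->
  is_derive x v (fun u => f u + g u) (df + dg).
Proof. move=> ? ?; exact: is_deriveD. Qed.
Lemma isdB (f g : 'rV[R]_3 -> R) x v df dg : is_derive x v f df -> is_derive x v g dg ->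
  is_derive x v (fun u => f u - g u) (df - dg).
Proof. move=> ? ?; exact: is_deriveB. Qed.
Lemma isdM (f g : 'rV[R]_3 -> R) x v df dg : is_derive x v f df -> is_derive x v g dg ->
  is_derive x v (fun u => f u * g u) (f x * dg + g x * df).
Proof. move=> ? ?; exact: is_deriveM. Qed.
Ltac dtac := repeat first [ apply: isd_coord | apply: isd_cst | apply: isdM | apply: isdB | apply: isdD ].

Variables alpha bu bp gamma cP L cIU cIP : R.

Definition Jg (x : 'rV[R]_3) (i j : nat) : R :=
let y := x 0 0 in let s := x 0 1 in let w := x 0 2 in let be := bu*w + bp*(1-w) in
let a := s + alpha*(1-s) in
if i == 0%N then (if j==0%N then (1-y)*a*be - gamma - a*be*y  else if j == 1%N then (1-y)*(1-alpha)*be*y else (1-y)*a*(bu-bp)*y)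
else if i == 1%N then (if j==0%N then - (s*(1-s)*L*(1-alpha)*be) else if j==1%N then (1-2*s)*(cP - L*(1-alpha)*be*y) else - (s*(1-s)*L*(1-alpha)*(bu-bp)*y))
else (if j==0%N then 0 else if j==1%N then 0 else (1-2*w)*(cIP-cIU)).

Lemma D0 x v : is_derive x v (fun u : 'rV[R]_3 => ((1 - u 0 0) * (u 0 1 + alpha * (1 - u 0 1)) * (bu * u 0 2 + bp * (1 - u 0 2)) - gamma) * u 0 0)
  (Jg x 0 0 * v 0 0 + Jg x 0 1 * v 0 1 + Jg x 0 2 * v 0 2).
Proof. apply: is_derive_eq; first dtac. rewrite /Jg /=. ring. Qed.
Lemma D1 x v : is_derive x v (fun u : 'rV[R]_3 => u 0 1 * (1 - u 0 1) * (cP - L * (1 - alpha) * (bu * u 0 2 + bp * (1 - u 0 2)) * u 0 0))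
  (Jg x 1 0 * v 0 0 + Jg x 1 1 * v 0 1 + Jg x 1 2 * v 0 2).
Proof. apply: is_derive_eq; first dtac. rewrite /Jg /=. ring. Qed.
Lemma D2 x v : is_derive x v (fun u : 'rV[R]_3 => u 0 2 * (1 - u 0 2) * (cIP - cIU))
  (Jg x 2 0 * v 0 0 + Jg x 2 1 * v 0 1 + Jg x 2 2 * v 0 2).
Proof. apply: is_derive_eq; first dtac. rewrite /Jg /=. ring. Qed.


Lemma dext (g : 'rV[R]_3 -> R) x v df : is_derive x v g df -> forall f, (forall u, f u = g u) -> 'D_v f x = df.
Proof. by move=> H f e; rewrite (funext e); exact: derive_val. Qed.

Lemma jacE x : Defs.jacobian (sis_field alpha bu bp gamma cP L cIU cIP) x = \matrix_(i<3,j<3) Jg x i j.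
Proof.
apply/matrixP => i j; rewrite [LHS]mxE [RHS]mxE.
case: i => [[|[|[|i]]] Hi] //=.
- etransitivity; first (apply: (dext _ _ _ _ (D0 x _)); by move=> u; rewrite /sis_field /pt3 mxE).
  by rewrite !mxE; case: j => [[|[|[|j]]] Hj] //=; ring.
- etransitivity; first (apply: (dext _ _ _ _ (D1 x _)); by move=> u; rewrite /sis_field /pt3 mxE).
  by rewrite !mxE; case: j => [[|[|[|j]]] Hj] //=; ring.
- etransitivity; first (apply: (dext _ _ _ _ (D2 x _)); by move=> u; rewrite /sis_field /pt3 mxE).
  by rewrite !mxE; case: j => [[|[|[|j]]] Hj] //=; ring.
Qed.

Lemma sisE a b c : sis_field alpha bu bp gamma cP L cIU cIP (pt3 a b c) =
  pt3 (((1 - a) * (b + alpha*(1-b)) * (bu*c + bp*(1-c)) - gamma)*a)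
      (b*(1-b)*(cP - L*(1-alpha)*(bu*c+bp*(1-c))*a)) (c*(1-c)*(cIP-cIU)).
Proof. by apply/rowP => j; rewrite /sis_field /pt3 !mxE /=. Qed.
Lemma pt3_0 (a b c : R) : a = 0 -> b = 0 -> c = 0 -> pt3 a b c = 0.
Proof. by move=> -> -> ->; apply/rowP => j; rewrite !mxE; case: ifP => _ //; case: ifP. Qed.
Lemma pos_negneg (a b : R) : a < 0 -> b < 0 -> 0 < a * b.
Proof. by move=> ha hb; nra. Qed.
Lemma pt30 : pt3 0 0 0 = 0 :> 'rV[R]_3.
Proof. by apply/rowP => j; rewrite !mxE; case: ifP => _ //; case: ifP. Qed.
End S.
Theorem proposition1 (R : realType) (alpha bu bp gamma cP L cIU cIP : R)
  (Halpha0 : 0 < alpha) (Halpha1 : alpha < 1) (Hbeta : bp < bu) (Hbp : 0 < bp)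
  (Hgamma : 0 < gamma) (HcP : 0 < cP) (HL : 0 < L)
  (HcIP : 0 <= cIP) (HcI : cIP < cIU) :
  let F := sis_field alpha bu bp gamma cP L cIU cIP in
  let yu := 1 - gamma / bp in
  let yint := cP / (L * (1 - alpha) * bp) in
  let yp := 1 - gamma / (alpha * bp) in
  let zSint := (1 - alpha)^-1 * (gamma / (bp * (1 - yint)) - alpha) in
  let E0 := pt3 0 0 0 in
  let E1 := pt3 0 1 0 in
  let E2 := pt3 yu 1 0 in
  let E3 := pt3 yint zSint 0 in
  let E4 := pt3 yp 0 0 in
  (* (1) *)
  (is_equilibrium F E0 /\ unstable_at F E0) /\
  (* (2) *)
  (is_equilibrium F E1 /\
   (bp < gamma -> stable_at F E1) /\ (gamma < bp -> unstable_at F E1)) /\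
  (* (3) *)
  (is_equilibrium F E2 /\
   ((0 < yu /\ yu <= 1) <-> gamma < bp) /\
   (gamma < bp -> (yu < yint -> stable_at F E2) /\ (yint < yu -> unstable_at F E2))) /\
  (* (4) *)
  (((0 < yint /\ yint < 1) /\ (0 < zSint /\ zSint < 1) <-> yp < yint /\ yint < yu) /\
   (yp < yint /\ yint < yu -> is_equilibrium F E3 /\ stable_at F E3)) /\
  (* (5) *)
  (is_equilibrium F E4 /\
   ((0 < yp /\ yp < 1) <-> gamma < alpha * bp) /\
   (gamma < alpha * bp -> (yint < yp -> stable_at F E4) /\ (yp < yint -> unstable_at F E4))).
Proof.
move=> F yu yint yp zSint E0 E1 E2 E3 E4.
have hK0 : 0 < L * (1 - alpha) * bp by rewrite !mulr_gt0 // subr_gt0.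
have hK : yint * (L * (1 - alpha) * bp) = cP by rewrite /yint mulfVK // lt0r_neq0.
set K := L * (1 - alpha) * bp in hK0 hK.
have eK : L * (1 - alpha) * bp = K by [].
have hyint0 : 0 < yint by rewrite /yint divr_gt0.
set q := gamma / bp.
set p := gamma / (alpha * bp).
have hq : q * bp = gamma by rewrite mulfVK // lt0r_neq0.
have hp : p * (alpha * bp) = gamma by rewrite mulfVK // lt0r_neq0 // mulr_gt0.
have hq0 : 0 < q by rewrite /q divr_gt0.
have hp0 : 0 < p by rewrite /p divr_gt0 // mulr_gt0.
have hcI : cIP - cIU < 0 by lra.
have ez : (1 - alpha) * zSint = gamma / (bp * (1 - yint)) - alpha.
  by rewrite /zSint mulrA mulfV ?mul1r // lt0r_neq0 // subr_gt0.
have eyu : yu = 1 - q by [].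
have eyp : yp = 1 - p by [].
clearbody yu yp zSint.
set r := gamma / (bp * (1 - yint)) in ez.
have hr : 1 - yint != 0 -> r * (bp * (1 - yint)) = gamma.
  by move=> h; rewrite /r mulfVK // mulf_neq0 // lt0r_neq0.
clearbody r yint q p K.

Ltac simpJ := rewrite /Jg !mxE /=;
  rewrite ?(mulr0, mul0r, subr0, sub0r, addr0, add0r, mulr1, mul1r, subrr, oppr0, opprK).
split.
  split; first by rewrite /is_equilibrium /F /E0 sisE !(mulr0, mul0r) pt30.
  by rewrite /unstable_at /F /E0 jacE; apply: unstable_g1; simpJ.
split.
  split; first by rewrite /is_equilibrium /F /E1 sisE ?(mulr0, mul0r, subrr) pt30.
  split => h.
    rewrite /stable_at /F /E1 jacE; apply: stable_g; simpJ; try nra.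
  rewrite /unstable_at /F /E1 jacE; apply: unstable_g0; simpJ; try nra.
split.
  split.
    rewrite /is_equilibrium /F /E2 sisE; apply: pt3_0; rewrite ?eyu -?hq; ring.
  split.
    rewrite eyu; split => [[h1 h2] | h]; nra.
  move=> hg; split => h.
    rewrite /stable_at /F /E2 jacE; apply: stable_g; simpJ; rewrite ?eyu ?eK -?hq; try nra.
    apply: pos_negneg; nra.
  rewrite /unstable_at /F /E2 jacE; apply: unstable_g1; simpJ; rewrite ?eyu ?eK -?hq; try nra.
have hA : 0 < alpha * bp by rewrite mulr_gt0.
have ha1 : 0 < 1 - alpha by rewrite subr_gt0.
split.
  split.
    rewrite eyu eyp; split => [[[h1 h2] [h3 h4]] | [h1 h2]].
      have hm : 1 - yint != 0 by rewrite lt0r_neq0 // subr_gt0.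
      have hr' := hr hm.
      have hB : 0 < bp * (1 - yint) by rewrite mulr_gt0 // subr_gt0.
      have hra : alpha < r by nra.
      have hr1 : r < 1 by nra.
      have e1 : alpha * (bp * (1 - yint)) = (1 - yint) * (alpha * bp) by ring.
      split; nra.
    have hy1 : yint < 1 by nra.
    have hm : 1 - yint != 0 by rewrite lt0r_neq0 // subr_gt0.
    have hr' := hr hm.
    have hB : 0 < bp * (1 - yint) by rewrite mulr_gt0 // subr_gt0.
    have e1 : alpha * (bp * (1 - yint)) = (1 - yint) * (alpha * bp) by ring.
    have hr1 : r < 1 by nra.
    have hra : alpha < r by nra.
    split; split; nra.
  rewrite eyu eyp => -[h1 h2].
  have hy1 : yint < 1 by nra.
  have hm : 1 - yint != 0 by rewrite lt0r_neq0 // subr_gt0.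
  have hr' := hr hm.
  have hB : 0 < bp * (1 - yint) by rewrite mulr_gt0 // subr_gt0.
  have e1 : alpha * (bp * (1 - yint)) = (1 - yint) * (alpha * bp) by ring.
  have hr1 : r < 1 by nra.
  have hra : alpha < r by nra.
  have ea : zSint + alpha * (1 - zSint) = r by nra.
  have hrb : 0 < r * bp by nra.
  split.
    rewrite /is_equilibrium /F /E3 sisE; apply: pt3_0.
    - by rewrite ea -hr'; ring.
    - by rewrite -hK -eK; ring.
    - ring.
  rewrite /stable_at /F /E3 jacE; apply: stable_g; simpJ; rewrite ?ea ?eK -?hK -?hr'; try nra.
  have hz0 : 0 < zSint by nra.
  have hz1 : zSint < 1 by nra.
  rewrite (_ : yint * K - K * yint = 0) ?mulr0 ?sub0r; last by ring.
  by rewrite mulrN opprK !mulr_gt0 // ?subr_gt0.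
split.
  rewrite /is_equilibrium /F /E4 sisE; apply: pt3_0; rewrite ?eyp -?hp; ring.
split.
  rewrite eyp; split => [[h1 h2] | h]; nra.
move=> hg; have hp1 : p < 1 by nra.
split => h.
  rewrite /stable_at /F /E4 jacE; apply: stable_g; simpJ; rewrite ?eyp ?eK -?hp; try nra.
  apply: pos_negneg; nra.
rewrite /unstable_at /F /E4 jacE; apply: unstable_g1; simpJ; rewrite ?eyp ?eK -?hp; try nra.
Qed.
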